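(* Let $n$, $q\ge2$ be integers and $a\in[1:n]$, $\nu=\lceil(n+1)/a\rceil$. Suppose $\mathbf{l}=(l_1,\dots,l_{q-1})$ and $\mathbf{l}'=(l_1',\dots,l_{q-1}')$ are adjacent elements of $V=\{\mathbf{m}\in[1:\nu]^{q-1}:\sum_im_i\le\frac na+q-1\}$. Then every $\mathbf{t}\in C_{\mathbf{l}}$ and $\mathbf{t}'\in C_{\mathbf{l}'}$ satisfy $d_{\mathrm c}(\mathbf{t},\mathbf{t}')\le\frac a2(2q+1)$.
   Context: $\mathcal{N}_{q,n}=\{\mathbf{t}\in\mathbb{Z}_{\ge0}^q:\sum t_i=n\}$; $C_{\mathbf{l}}=\{\mathbf{t}\in\mathcal{N}_{q,n}:(l_i-1)a\le t_i\le l_ia-1\ \forall i\in[1:q-1]\}$. Two distinct $\mathbf{l},\mathbf{l}'$ are adjacent if either all coordinates agree except one, where they differ by exactly $1$, or all coordinates agree except two indexed by $k,j$, where $l_k=l_k'+1$ and $l_j=l_j'-1$. $d_{\mathrm c}(\mathbf{t},\mathbf{t}')=\frac12\sum_{i=1}^q|t_i-t_i'|$. *)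

(* Defs.v *)
From mathcomp Require Import all_boot all_order all_algebra.
Set Implicit Arguments. Unset Strict Implicit. Unset Printing Implicit Defensive.
Import Order.TTheory GRing.Theory Num.Theory.
Local Open Scope ring_scope.

Definition in_Nqn (q n : nat) (t : 'I_q -> nat) : Prop :=
  (\sum_(i < q) t i)%N = n.

(* The inequalities are taken in int to avoid truncated subtraction. *)
Definition in_C (q n a : nat) (l : 'I_q.-1 -> nat) (t : 'I_q -> nat) : Prop :=
  in_Nqn n t /\
  forall i : 'I_q.-1,
    ((l i)%:Z - 1) * a%:Z <= (t (widen_ord (leq_pred q) i))%:Z /\
    (t (widen_ord (leq_pred q) i))%:Z <= (l i)%:Z * a%:Z - 1.

Definition adjacent (k : nat) (l l' : 'I_k -> nat) : Prop :=
  (exists i, l i <> l' i) /\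
  ((exists j : 'I_k, (forall i, i != j -> l i = l' i) /\
       ((l j = (l' j).+1) \/ (l' j = (l j).+1)))
   \/
   (exists kk j : 'I_k, kk != j /\ (forall i, i != kk -> i != j -> l i = l' i) /\
       l kk = (l' kk).+1 /\ l' j = (l j).+1)).

(* nu = ceil((n+1)/a), for a >= 1 *)
Definition nu (n a : nat) : nat := ((n + a) %/ a)%N.

Definition in_V (q n a : nat) (m : 'I_q.-1 -> nat) : Prop :=
  (forall i, 1 <= m i <= nu n a)%N /\
  ((\sum_(i < q.-1) m i)%:R : rat) <= (n%:R / a%:R) + q%:R - 1.

Definition dc (q : nat) (t t' : 'I_q -> nat) : rat :=
  2^-1 * \sum_(i < q) `|(t i)%:R - (t' i)%:R|.

(* Main.v *)
Require Import Defs.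
From mathcomp Require Import all_boot all_order all_algebra zify ring lra.
Import Order.TTheory GRing.Theory Num.Theory.
Local Open Scope ring_scope.

Lemma key (a l l' t t' : int) : (l-1)*a <= t -> t <= l*a-1 ->
  (l'-1)*a <= t' -> t' <= l'*a-1 -> `|t - t' - (l-l')*a| <= a - 1.
Proof.
move=> h1 h2 h3 h4; rewrite ler_norml; apply/andP; split; lia.
Qed.

Lemma adj_sums k (l l' : 'I_k -> nat): adjacent l l' ->
  \sum_i `|(l i)%:Z - (l' i)%:Z| <= 2 /\ `|\sum_i ((l i)%:Z - (l' i)%:Z)| <= 1.
Proof.
case=> _ [[j [Ho Hj]]|[kk [j [Hne [Ho [Hk Hj]]]]]].
- have E : forall i, i != j -> (l i)%:Z - (l' i)%:Z = 0.
    by move=> i /Ho ->; rewrite subrr.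
  rewrite (bigD1 j) //= big1 ?addr0; last by move=> i /E ->.
  rewrite (bigD1 j) //= big1 ?addr0; last by move=> i /E ->.
  case: Hj => ->; split; lia.
- have E : forall i, i != kk -> i != j -> (l i)%:Z - (l' i)%:Z = 0.
    by move=> i h1 h2; rewrite (Ho i h1 h2) subrr.
  have Hjk : j != kk by rewrite eq_sym.
  rewrite (bigD1 kk) //= (bigD1 j) //= big1 ?addr0; last first.
    by move=> i /andP[h1 h2]; rewrite E.
  rewrite (bigD1 kk) //= (bigD1 j) //= big1 ?addr0; last first.
    by move=> i /andP[h1 h2]; rewrite E ?normr0.
  rewrite Hk Hj; split; lia.
Qed.
Lemma int_claim (n q a : nat) (hq : (2 <= q)%N) (ha1 : (1 <= a)%N)
  (l l' : 'I_q.-1 -> nat) (t t' : 'I_q -> nat) :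
  adjacent l l' -> in_C n a l t -> in_C n a l' t' ->
  \sum_(i < q) `|(t i)%:Z - (t' i)%:Z| <= (a * (2 * q + 1))%N%:Z.
Proof.
case: q hq l l' t t' => // q hq l l' t t' Hadj [Hs Hb] [Hs' Hb'].
have [S1 S2] := adj_sums _ _ _ Hadj.
rewrite /in_Nqn in Hs Hs'.
pose w (i : 'I_q) : 'I_q.+1 := widen_ord (leq_pred q.+1) i.
have Ew : forall i : 'I_q, widen_ord (leqnSn q) i = w i by move=> i; apply: val_inj.
pose D i := (t (w i))%:Z - (t' (w i))%:Z.
pose d i := (l i)%:Z - (l' i)%:Z.
have He : forall i, `|D i - d i * a%:Z| <= a%:Z - 1.
  move=> i; have [h1 h2] := Hb i; have [h3 h4] := Hb' i; exact: key.
have Hlast : (t ord_max)%:Z - (t' ord_max)%:Z = - \sum_i D i.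
  have := congr1 (fun m : nat => m%:R : int) Hs.
  have := congr1 (fun m : nat => m%:R : int) Hs'.
  rewrite !natr_sum !big_ord_recr /=.
  under eq_bigr do rewrite Ew.
  move=> E1; under eq_bigr do rewrite Ew.
  move=> E2; rewrite /D sumrB; move: E1 E2.
  have N : forall f : 'I_q -> nat, \sum_i (f i)%:R = \sum_i (f i)%:Z :> int.
    by move=> f; apply: eq_bigr => i _; rewrite natz.
  rewrite !N !natz => E1 E2. set A := \sum_(i < q) (t (w i))%:Z. set B := \sum_(i < q) (t' (w i))%:Z. have eA : \sum_i (t (w i))%:Z = A by []. have eB : \sum_i (t' (w i))%:Z = B by []. rewrite eA in E2; rewrite eB in E1; lia.
rewrite big_ord_recr /= Hlast normrN.
under eq_bigr do rewrite Ew.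
have Na : `|a%:Z| = a%:Z by [].
have Ht : \sum_(i < q) `|D i| <= a%:Z * \sum_i `|d i| + (q%:Z * (a%:Z - 1)).
  have -> : q%:Z * (a%:Z - 1) = \sum_(i < q) (a%:Z - 1).
    by rewrite sumr_const card_ord -mulr_natl natz.
  rewrite mulr_sumr -big_split /=; apply: ler_sum => i _.
  have := He i => h.
  have := ler_normD (D i - d i * a%:Z) (d i * a%:Z); rewrite subrK normrM.
  rewrite Na; lra.
have Hs2 : `|\sum_(i < q) D i| <= a%:Z * `|\sum_i d i| + (q%:Z * (a%:Z - 1)).
  have -> : q%:Z * (a%:Z - 1) = \sum_(i < q) (a%:Z - 1).
    by rewrite sumr_const card_ord -mulr_natl natz.
  have -> : \sum_(i < q) D i = \sum_i (D i - d i * a%:Z) + (\sum_i d i) * a%:Z.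
    by rewrite mulr_suml -big_split /=; apply: eq_bigr => i _; rewrite subrK.
  apply: le_trans (ler_normD _ _) _.
  rewrite normrM Na addrC mulrC lerD2l.
  apply: le_trans (ler_norm_sum _ _ _) _; apply: ler_sum => i _; exact: He.
have Ha : 1 <= a%:Z by lia.
have : a%:Z * \sum_i `|d i| <= a%:Z * 2 by rewrite ler_pM2l //; lia.
have : a%:Z * `|\sum_i d i| <= a%:Z * 1 by rewrite ler_pM2l //; lia.
rewrite /d in Ht Hs2 |- *.
move: Ht Hs2; set X := \sum_(i < q) `|D i|; set Y := `|\sum_(i < q) D i|.
set U := a%:Z * _; set V := a%:Z * _.
move=> *; have : (0 <= q%:Z) by lia.
nia.
Qed.
Theorem lemma13 (n q a : nat) (hq : (2 <= q)%N) (ha1 : (1 <= a)%N) (han : (a <= n)%N)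
  (l l' : 'I_q.-1 -> nat) (t t' : 'I_q -> nat) :
  in_V n a l -> in_V n a l' -> adjacent l l' ->
  in_C n a l t -> in_C n a l' t' ->
  dc t t' <= (a%:R / 2) * (2 * q + 1)%:R.
Proof.
move=> _ _ Hadj HC HC'.
have H := int_claim n q a hq ha1 l l' t t' Hadj HC HC'.
have E : \sum_(i < q) `|(t i)%:R - (t' i)%:R| = (\sum_(i < q) `|(t i)%:Z - (t' i)%:Z|)%:~R :> rat.
  rewrite rmorph_sum; apply: eq_bigr => i _.
  have -> : (t i)%:R - (t' i)%:R = ((t i)%:Z - (t' i)%:Z)%:~R :> rat by rewrite intrB.
  by rewrite -intr_norm.
rewrite /dc E.
have : (\sum_(i < q) `|(t i)%:Z - (t' i)%:Z|)%:~R <= ((a * (2 * q + 1))%N%:Z)%:~R :> rat.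
  by rewrite ler_int.
rewrite -[((a * _)%N%:Z)%:~R]/((a * (2 * q + 1))%N%:R) natrM.
lra.
Qed.
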